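(* Let $\lambda$ be a nonzero real number, $x$ real, and $n\ge0$ an integer. Then $$\sum_{k=0}^{n}S_{1,\lambda}(n,k)\,\mathcal{E}_{k,\lambda}(x)=n!\sum_{k=0}^{n}\binom{x}{k}\Big(-\frac{1}{2}\Big)^{n-k},$$ and $$\mathcal{E}_{n,\lambda}(x)=\sum_{k=0}^{n}k!\,S_{2,\lambda}(n,k)\sum_{j=0}^{k}\binom{x}{j}\Big(-\frac{1}{2}\Big)^{k-j}.$$
   Context: For real $x$ and integer $k\ge0$: $(x)_{0,\lambda}=1$, $(x)_{k,\lambda}=x(x-\lambda)\cdots(x-(k-1)\lambda)$; $(x)_0=1$, $(x)_k=x(x-1)\cdots(x-k+1)$. The degenerate exponential is $e_\lambda^x(t)=\sum_{k\ge0}(x)_{k,\lambda}t^k/k!=(1+\lambda t)^{x/\lambda}$, and $e_\lambda(t)=e^1_\lambda(t)$. The degenerate Euler polynomials are defined by $\frac{2}{e_\lambda(t)+1}e_\lambda^x(t)=\sum_{n\ge0}\mathcal{E}_{n,\lambda}(x)\frac{t^n}{n!}$. The degenerate Stirling numbers are defined by $(x)_{n}=\sum_{k=0}^{n}S_{1,\lambda}(n,k)(x)_{k,\lambda}$ and $(x)_{n,\lambda}=\sum_{k=0}^{n}S_{2,\lambda}(n,k)(x)_{k}$ ($n\ge0$). *)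

(* Defs.v *)
From mathcomp Require Import all_boot all_order all_algebra.
From mathcomp Require Import reals.
Set Implicit Arguments. Unset Strict Implicit. Unset Printing Implicit Defensive.
Import Order.TTheory GRing.Theory Num.Theory.
Local Open Scope ring_scope.

Definition dfall {R : realType} (lam x : R) (k : nat) : R :=
  \prod_(i < k) (x - i%:R * lam).

Definition fall {R : realType} (x : R) (k : nat) : R :=
  \prod_(i < k) (x - i%:R).

Definition rbinom {R : realType} (x : R) (k : nat) : R := fall x k / (k`!)%:R.

(* coefficient of t^n in the formal power series e_lambda^x(t) = sum (x)_{k,lambda} t^k/k! *)
Definition degexp_coef {R : realType} (lam x : R) (n : nat) : R :=
  dfall lam x n / (n`!)%:R.

Definition cauchy {R : realType} (a b : nat -> R) (n : nat) : R :=
  \sum_(k < n.+1) a k * b (n - k)%N.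

(* E is the family of degenerate Euler polynomials: as formal power series in t,
   2/(e_lambda(t)+1) e_lambda^x(t) = sum_n E n x t^n/n!,
   i.e. (since e_lambda(t)+1 has invertible constant term 2)
   (e_lambda(t) + 1) * (sum_n E n x t^n/n!) = 2 e_lambda^x(t). *)
Definition is_degEuler {R : realType} (lam : R) (E : nat -> R -> R) : Prop :=
  forall x : R, forall n : nat,
    cauchy (fun k => degexp_coef lam 1 k + (k == 0%N)%:R)
           (fun k => E k x / (k`!)%:R) n
    = 2 * degexp_coef lam x n.

Definition is_degStirling1 {R : realType} (lam : R) (S1 : nat -> nat -> R) : Prop :=
  forall (n : nat) (x : R), fall x n = \sum_(k < n.+1) S1 n k * dfall lam x k.

Definition is_degStirling2 {R : realType} (lam : R) (S2 : nat -> nat -> R) : Prop :=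
  forall (n : nat) (x : R), dfall lam x n = \sum_(k < n.+1) S2 n k * fall x k.

(* Main.v *)
Require Import Defs.
From mathcomp Require Import all_boot all_order all_algebra.
From mathcomp Require Import reals ring.
Import Order.TTheory GRing.Theory Num.Theory.
Local Open Scope ring_scope.

Section H.
Variable R : realType.
Implicit Types (lam x y a b : R).

Lemma dfallS lam x n : dfall lam x n.+1 = dfall lam x n * (x - n%:R * lam).
Proof. by rewrite /dfall big_ord_recr. Qed.

Lemma fallS x n : fall x n.+1 = fall x n * (x - n%:R).
Proof. by rewrite /fall big_ord_recr. Qed.

Lemma fall0 x : fall x 0 = 1. Proof. by rewrite /fall big_ord0. Qed.
Lemma dfall0 lam x : dfall lam x 0 = 1. Proof. by rewrite /dfall big_ord0. Qed.

Lemma fall_shift y n : fall (y + 1) n.+1 = (y + 1) * fall y n.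
Proof.
rewrite /fall big_ord_recl /= subr0; congr (_ * _).
by apply: eq_bigr => i _; rewrite /bump /= natrD; ring.
Qed.

Lemma fall_pascal y n : fall (y + 1) n.+1 = fall y n.+1 + n.+1%:R * fall y n.
Proof. rewrite fall_shift fallS -addn1 natrD; ring. Qed.

Lemma widenZ (N j : nat) (G : nat -> R) : (j < N)%N -> (forall k, (j < k)%N -> G k = 0) ->
  \sum_(k < j.+1) G k = \sum_(k < N) G k.
Proof.
move=> jN h0; rewrite (big_ord_widen N G jN) big_mkcond /=.
apply: eq_bigr => k _; case: ifP => // /negbT; rewrite -leqNgt => h.
by rewrite h0.
Qed.

Lemma vander lam a b n : dfall lam (a + b) n =
  \sum_(k < n.+1) 'C(n, k)%:R * dfall lam a k * dfall lam b (n - k).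
Proof.
elim: n => [|n IH]; first by by rewrite big_ord1 !dfall0 bin0 mulr1 mul1r.
rewrite dfallS IH mulr_suml.
have e1 : forall k : 'I_n.+1, 'C(n, k)%:R * dfall lam a k * dfall lam b (n - k) *
     (a + b - n%:R * lam) =
   'C(n, k)%:R * dfall lam a k.+1 * dfall lam b (n - k) +
   'C(n, k)%:R * dfall lam a k * dfall lam b (n.+1 - k).
  move=> k; have kn : (k <= n)%N by rewrite -ltnS ltn_ord.
  rewrite subSn // !dfallS natrB //; ring.
rewrite (eq_bigr _ (fun k _ => e1 k)) big_split /=.
rewrite [in RHS]big_ord_recl /= bin0 subn0 dfall0 ?(mulr1, mul1r).
under [in RHS]eq_bigr => k _ do rewrite /bump /= add1n subSS binS natrD !mulrDl.
rewrite big_split /= [X in _ = _ + X]addrC [RHS]addrCA; congr (_ + _).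
rewrite big_ord_recl /= bin0 subn0 dfall0 ?(mulr1, mul1r); congr (_ + _).
rewrite [in RHS]big_ord_recr /= bin_small // ?(mul0r, addr0).
by apply: eq_bigr => k _; rewrite /bump /= add1n subSS.
Qed.


Lemma duniq lam N (c : nat -> R) : lam != 0 ->
  (forall y, \sum_(j < N) c j * dfall lam y j = 0) -> forall k, (k < N)%N -> c k = 0.
Proof.
move=> l0 H; elim/ltn_ind => k IH kN.
have := H (k%:R * lam).
rewrite (bigD1 (Ordinal kN)) //= big1 ?addr0.
- move/eqP; rewrite mulf_eq0 => /orP [/eqP //|] /eqP h; exfalso; move: h; apply/eqP.
  apply/prodf_neq0 => i _; rewrite -mulrBl mulf_neq0 // subr_eq0 eqr_nat neq_ltn ltn_ord orbT //.
- move=> j hj; case: (ltngtP j k) => jk.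
  + by rewrite IH // mul0r.
  + by rewrite /dfall (bigD1 (Ordinal jk)) //= subrr mul0r mulr0.
  + by exfalso; move: hj; apply/negP; rewrite negbK; apply/eqP/val_inj.
Qed.

Lemma duniq2 lam N (c c' : nat -> R) : lam != 0 ->
  (forall y, \sum_(j < N) c j * dfall lam y j = \sum_(j < N) c' j * dfall lam y j) ->
  forall k, (k < N)%N -> c k = c' k.
Proof.
move=> l0 H k kN; apply/eqP; rewrite -subr_eq0; apply/eqP.
apply: (@duniq lam N (fun j => c j - c' j)) l0 _ k kN => y.
under eq_bigr => j _ do rewrite mulrBl.
by rewrite sumrB H subrr.
Qed.

Lemma euler lam (E : nat -> R -> R) : is_degEuler lam E -> forall x n,
  \sum_(k < n.+1) 'C(n, k)%:R * dfall lam 1 (n - k) * E k x + E n x = 2 * dfall lam x n.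
Proof.
move=> HE x n; have := HE x n; rewrite /cauchy /degexp_coef.
under eq_bigr => k _ do rewrite mulrDl.
rewrite big_split /= [X in _ + X = _]big_ord_recl /= subn0 mul1r.
rewrite [X in _ + (_ + X)]big1; last by move=> i _; rewrite mul0r.
rewrite addr0 (reindex_inj rev_ord_inj) /= => h.
have nf : (n`!)%:R != 0 :> R by rewrite pnatr_eq0 -lt0n fact_gt0.
apply: (mulIf (invr_neq0 nf)); rewrite -mulrA -h mulrDl mulr_suml; congr (_ + _).
apply: eq_bigr => k _.
have kn : (k <= n)%N by rewrite -ltnS ltn_ord.
rewrite subSS subKn //.
have := bin_fact kn => /(congr1 (fun m => m%:R : R)); rewrite !natrM => hf.
have f1 : (k`!)%:R != 0 :> R by rewrite pnatr_eq0 -lt0n fact_gt0.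
have f2 : ((n - k)`!)%:R != 0 :> R by rewrite pnatr_eq0 -lt0n fact_gt0.
rewrite -hf; field; rewrite f1 f2 pnatr_eq0 -lt0n bin_gt0 kn //.
Qed.


Lemma lemA lam (E : nat -> R -> R) N (c e : nat -> R) x : lam != 0 -> is_degEuler lam E ->
 (forall y, \sum_(j < N) c j * dfall lam y j =
            \sum_(j < N) e j * (dfall lam (y + 1) j + dfall lam y j)) ->
 \sum_(j < N) c j * E j x = 2 * \sum_(j < N) e j * dfall lam x j.
Proof.
move=> l0 HE H.
pose c' k := \sum_(j < N) e j * ('C(j, k)%:R * dfall lam 1 (j - k)) + e k.
have key : forall k, (k < N)%N -> c k = c' k.
  apply: duniq2 l0 _ => y; rewrite H.
  rewrite /c'; under [RHS]eq_bigr => k _ do rewrite mulrDl mulr_suml.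
  rewrite big_split /=; under eq_bigr => j _ do rewrite mulrDr.
  rewrite big_split /=; congr (_ + _).
  rewrite exchange_big /=; apply: eq_bigr => j _.
  rewrite vander; under eq_bigr => k _ do rewrite -mulrA.
  have -> : \sum_(k < j.+1) 'C(j, k)%:R * dfall lam y k * dfall lam 1 (j - k) =
            \sum_(k < N) 'C(j, k)%:R * dfall lam y k * dfall lam 1 (j - k).
    by apply: (@widenZ N j (fun k => 'C(j, k)%:R * dfall lam y k * dfall lam 1 (j - k)) (ltn_ord j)) => k jk; rewrite bin_small // !mul0r.
  rewrite mulr_sumr; apply: eq_bigr => k _; ring.
under eq_bigr => k _ do rewrite (key k (ltn_ord k)).
rewrite /c'; under eq_bigr => k _ do rewrite mulrDl mulr_suml.
rewrite big_split /= exchange_big /= mulr_sumr -big_split /=.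
apply: eq_bigr => j _.
rewrite mulrCA -(@euler lam E HE x j); under eq_bigr => k _ do rewrite -mulrA.
have -> : \sum_(k < j.+1) 'C(j, k)%:R * dfall lam 1 (j - k) * E k x =
          \sum_(k < N) 'C(j, k)%:R * dfall lam 1 (j - k) * E k x.
  by apply: (@widenZ N j (fun k => 'C(j, k)%:R * dfall lam 1 (j - k) * E k x) (ltn_ord j)) => k jk; rewrite bin_small // !mul0r.
rewrite mulrDr mulr_sumr; congr (_ + _); apply: eq_bigr => k _; ring.
Qed.


Lemma split_c (k : nat) (a b : nat -> R) (p q : R) (f : nat -> R) :
 \sum_(j < k.+2) (2 * (a j / p) + (j < k.+1)%:R * (b j / q)) * f j =
 2 * (\sum_(j < k.+2) a j * f j) / p + (\sum_(j < k.+1) b j * f j) / q.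
Proof.
under eq_bigr => j _ do rewrite mulrDl.
rewrite big_split /=; congr (_ + _).
  by rewrite -mulrA mulr_suml mulr_sumr; apply: eq_bigr => j _; ring.
rewrite big_ord_recr /= ltnn mul0r mul0r addr0 mulr_suml.
by apply: eq_bigr => j _; rewrite ltn_ord mul1r; ring.
Qed.

Lemma tri n (F : nat -> nat -> R) :
  \sum_(k < n.+1) \sum_(j < k.+1) F k j =
  \sum_(j < n.+1) \sum_(k < n.+1) (j <= k)%:R * F k j.
Proof.
rewrite exchange_big /=; apply: eq_bigr => k _.
have e : \sum_(j < k.+1) F k j = \sum_(j < k.+1) (j <= k)%:R * F k j.
  by apply: eq_bigr => j _; rewrite -ltnS ltn_ord mul1r.
rewrite e; apply: (@widenZ n.+1 k (fun j => (j <= k)%:R * F k j) (ltn_ord k)).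
by move=> j kj; rewrite leqNgt kj mul0r.
Qed.

Lemma fact_neq0 k : (k`!)%:R != 0 :> R.
Proof. by rewrite pnatr_eq0 -lt0n fact_gt0. Qed.

End H.

Theorem theorem4 (R : realType) (lam : R) (E : nat -> R -> R)
  (S1 S2 : nat -> nat -> R) :
  lam != 0 ->
  is_degEuler lam E -> is_degStirling1 lam S1 -> is_degStirling2 lam S2 ->
  forall (x : R) (n : nat),
    \sum_(k < n.+1) S1 n k * E k x
      = (n`!)%:R * \sum_(k < n.+1) rbinom x k * (- 2^-1) ^+ (n - k)
    /\
    E n x = \sum_(k < n.+1) (k`!)%:R * S2 n k *
              \sum_(j < k.+1) rbinom x j * (- 2^-1) ^+ (k - j).
Proof.
move=> l0 HE H1 H2 x.
pose Phi k := \sum_(j < k.+1) S1 k j * E j x.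
have S100 : S1 0%N 0%N = 1.
  by have := H1 0%N x; rewrite big_ord1 fall0 dfall0 mulr1.
have E0 : E 0%N x = 1.
  have := @euler R lam E HE x 0; rewrite big_ord1 bin0 !dfall0 => h.
  have h2 : 2 * E 0%N x = 2 * 1 by rewrite -h; ring.
  by apply: (mulfI (_ : (2:R) != 0) h2); rewrite pnatr_eq0.
have step : forall k, 2 * Phi k.+1 / (k.+1`!)%:R + Phi k / (k`!)%:R = 2 * rbinom x k.+1.
  move=> k.
  have := @lemA R lam E k.+2
    (fun j => 2 * (S1 k.+1 j / (k.+1`!)%:R) + (j < k.+1)%:R * (S1 k j / (k`!)%:R))
    (fun j => S1 k.+1 j / (k.+1`!)%:R) x l0 HE.
  cbv beta.
  have e1 := split_c R k (S1 k.+1) (S1 k) (k.+1`!%:R) (k`!%:R) (fun j => E j x).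
  cbv beta in e1; rewrite e1 /rbinom.
  have Hd : forall y, \sum_(j < k.+1) S1 k j * dfall lam y j = fall y k.
    by move=> y; rewrite H1.
  have Hd1 : forall y, \sum_(j < k.+2) S1 k.+1 j / (k.+1`!)%:R * dfall lam y j
                       = fall y k.+1 / (k.+1`!)%:R.
    by move=> y; rewrite H1 mulr_suml; apply: eq_bigr => j _; ring.
  rewrite Hd1 => -> //.
  move=> y; rewrite (@split_c R k (S1 k.+1) (S1 k) (k.+1`!%:R) (k`!%:R) (dfall lam y)) Hd.
  have -> : \sum_(j < k.+2) S1 k.+1 j * dfall lam y j = fall y k.+1 by rewrite H1.
  have -> : \sum_(j < k.+2) S1 k.+1 j / (k.+1`!)%:R * (dfall lam (y + 1) j + dfall lam y j)
     = fall (y + 1) k.+1 / (k.+1`!)%:R + fall y k.+1 / (k.+1`!)%:R.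
    rewrite -!Hd1 -big_split /=; apply: eq_bigr => j _; ring.
  rewrite fall_pascal factS natrM.
  have := fact_neq0 R k; have : (k.+1)%:R != 0 :> R by rewrite pnatr_eq0.
  move=> h1 h2; field; rewrite h2 addrC natr1 h1 //.
have phiv : forall k, Phi k / (k`!)%:R = \sum_(i < k.+1) rbinom x i * (- 2^-1) ^+ (k - i).
  move=> k; elim: k => [|k IH].
    rewrite big_ord1 /Phi big_ord1 S100 E0 /rbinom fall0 subnn expr0; ring.
  rewrite big_ord_recr /= subnn expr0 mulr1.
  have -> : \sum_(i < k.+1) rbinom x i * (- 2^-1) ^+ (k.+1 - i) =
            (- 2^-1) * \sum_(i < k.+1) rbinom x i * (- 2^-1) ^+ (k - i).
    rewrite mulr_sumr; apply: eq_bigr => i _.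
    have ik : (i <= k)%N by rewrite -ltnS ltn_ord.
    rewrite subSn // exprS; ring.
  rewrite -IH; have := step k; rewrite -mulrA.
  move: (Phi k.+1 / (k.+1`!)%:R) (Phi k / (k`!)%:R) (rbinom x k.+1) => a b c h.
  have t : (2 : R) != 0 by rewrite pnatr_eq0.
  have -> : a = (2 * a + b) / 2 - b / 2 by field.
  by rewrite h; field.
move=> n; split.
  by rewrite -phiv; have := fact_neq0 R n => h; rewrite /Phi; field.
under eq_bigr => k _ do rewrite -phiv.
have -> : \sum_(k < n.+1) (k`!)%:R * S2 n k * (Phi k / (k`!)%:R) =
          \sum_(k < n.+1) S2 n k * Phi k.
  by apply: eq_bigr => k _; have := fact_neq0 R k => h; field.
pose M j := \sum_(k < n.+1) (j <= k)%:R * (S2 n k * S1 k j).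
have ortho : forall f : nat -> R,
    \sum_(k < n.+1) S2 n k * \sum_(j < k.+1) S1 k j * f j = \sum_(j < n.+1) M j * f j.
  move=> f; under eq_bigr => k _ do rewrite mulr_sumr.
  have e := tri R n (fun k j => S2 n k * (S1 k j * f j)); cbv beta in e; rewrite e.
  by apply: eq_bigr => j _; rewrite /M mulr_suml; apply: eq_bigr => k _; ring.
have sumn : forall f : nat -> R, \sum_(j < n.+1) ((j : nat) == n)%:R * f j = f n.
  move=> f; rewrite big_ord_recr /= eqxx mul1r big1 ?add0r //.
  by move=> j _; rewrite (ltn_eqF (ltn_ord j)) mul0r.
have hM : forall j, (j < n.+1)%N -> M j = (j == n)%:R.
  apply: (@duniq2 R lam n.+1 M (fun j => (j == n)%:R) l0) => y.
  have e := ortho (dfall lam y); rewrite -e.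
  under eq_bigr => k _ do rewrite -H1.
  have e2 := sumn (dfall lam y); cbv beta in e2; rewrite e2.
  by rewrite -H2.
have e := ortho (fun j => E j x); cbv beta in e; rewrite /Phi e.
under eq_bigr => j _ do rewrite (hM j (ltn_ord j)).
have e2 := sumn (fun j => E j x); cbv beta in e2; by rewrite e2.
Qed.
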